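(* Let $k\ge 3$, $\varepsilon\in[0,\tfrac12)$, and let $b^t=(b^t_0,\dots,b^t_{k-1})$ be the counterclockwise vertices of a convex polygon (consecutive collinear vertices allowed) with $\|b^t_j-b^t_{j+1}\|\le 1$ for all $j$ (indices mod $k$). Define $b^{t+1}=\Phi_\varepsilon(b^t)$ and $b^{t+2}=\Phi_\varepsilon(b^{t+1})$. Then for every $j$, every point $p$ lying in the quadrilateral with corners $b^t_j,b^t_{j+1},b^{t+1}_{j+1},b^{t+1}_j$ or in the quadrilateral with corners $b^{t+1}_j,b^{t+1}_{j+1},b^{t+2}_{j+1},b^{t+2}_j$ satisfies $\|p-b^t_j\|\le 1+\frac{\varepsilon^2}{2}$ and $\|p-b^t_{j+1}\|\le 1+\frac{\varepsilon^2}{2}$.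
   Context: The $\varepsilon$-GtM step is the map $\Phi_\varepsilon\colon(\mathbb{R}^2)^k\to(\mathbb{R}^2)^k$, $(b_0,\dots,b_{k-1})\mapsto(b_0^+,\dots,b_{k-1}^+)$ with $b_j^+=\varepsilon\frac{b_{j-1}+b_{j+1}}{2}+(1-\varepsilon)b_j$, indices modulo $k$. $\|\cdot\|$ is the Euclidean norm. ''Lying in a quadrilateral'' means lying in the closed region it bounds (in particular in the convex hull of its four corners). *)

(* Defs.v *)
From mathcomp Require Import all_boot all_order all_algebra.
Set Implicit Arguments. Unset Strict Implicit. Unset Printing Implicit Defensive.
Import Order.TTheory GRing.Theory Num.Theory.
Local Open Scope ring_scope.

Section Geom.
Variable R : rcfType.

Definition pt := (R * R)%type.

Definition padd (a b : pt) : pt := (a.1 + b.1, a.2 + b.2).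
Definition psub (a b : pt) : pt := (a.1 - b.1, a.2 - b.2).
Definition pscale (c : R) (a : pt) : pt := (c * a.1, c * a.2).

Definition enorm (a : pt) : R := Num.sqrt (a.1 ^+ 2 + a.2 ^+ 2).

Definition cross (a b : pt) : R := a.1 * b.2 - a.2 * b.1.

Definition vtx (k : nat) (b : nat -> pt) (j : nat) : pt := b (j %% k)%N.

Definition gtm (eps : R) (k : nat) (b : nat -> pt) : nat -> pt :=
  fun j => padd (pscale (eps / 2) (padd (vtx k b (j + k - 1)%N) (vtx k b j.+1)))
                (pscale (1 - eps) (vtx k b j)).

(* b_0,...,b_{k-1} are the counterclockwise vertices of a convex polygon
   (consecutive collinear vertices allowed): the vertices are pairwise
   distinct, every vertex lies on or to the left of every directed edge
   b_j -> b_{j+1}, and the polygon is non-degenerate (some vertex is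
   strictly to the left of some edge). *)
Definition convex_ccw (k : nat) (b : nat -> pt) : Prop :=
  [/\ (forall i j, (i < k)%N -> (j < k)%N -> i <> j -> vtx k b i <> vtx k b j),
      (forall i j, 0 <= cross (psub (vtx k b j.+1) (vtx k b j)) (psub (vtx k b i) (vtx k b j)))
    & (exists i j, 0 < cross (psub (vtx k b j.+1) (vtx k b j)) (psub (vtx k b i) (vtx k b j)))].

Definition in_quad (p a b c d : pt) : Prop :=
  exists l1 l2 l3 l4 : R,
    [/\ 0 <= l1, 0 <= l2, 0 <= l3 & 0 <= l4] /\ l1 + l2 + l3 + l4 = 1
      /\ p = padd (padd (pscale l1 a) (pscale l2 b)) (padd (pscale l3 c) (pscale l4 d)).

End Geom.

(* Main.v *)
Require Import Defs.
From mathcomp Require Import all_boot all_order all_algebra.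
From mathcomp Require Import ring lra.
Import Order.TTheory GRing.Theory Num.Theory.
Local Open Scope ring_scope.

Section Aux.
Variable R : rcfType.
Implicit Types (a c w q : pt R).

Lemma enorm_ge0 a : 0 <= enorm a.
Proof. exact: sqrtr_ge0. Qed.

Lemma enorm_tri a c : enorm (padd a c) <= enorm a + enorm c.
Proof.
rewrite /enorm /padd /=.
set A := a.1 ^+ 2 + a.2 ^+ 2; set C := c.1 ^+ 2 + c.2 ^+ 2.
have A0 : 0 <= A by rewrite /A; nra.
have C0 : 0 <= C by rewrite /C; nra.
have sa0 := sqrtr_ge0 A; have sc0 := sqrtr_ge0 C.
have sa2 := sqr_sqrtr A0; have sc2 := sqr_sqrtr C0.
set sa := Num.sqrt A in sa0 sa2 *; set sc := Num.sqrt C in sc0 sc2 *.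
have s0 : 0 <= sa + sc by lra.
rewrite -[sa + sc]ger0_norm // -sqrtr_sqr ler_sqrt; last by nra.
have key : (a.1 * c.1 + a.2 * c.2) ^+ 2 <= (sa * sc) ^+ 2.
  rewrite exprMn sa2 sc2 /A /C -subr_ge0.
  have -> : (a.1 ^+ 2 + a.2 ^+ 2) * (c.1 ^+ 2 + c.2 ^+ 2) - (a.1 * c.1 + a.2 * c.2) ^+ 2 = (a.1 * c.2 - a.2 * c.1) ^+ 2 by ring.
  exact: sqr_ge0.
have key2 : a.1 * c.1 + a.2 * c.2 <= sa * sc.
  have p0 : 0 <= sa * sc by nra.
  nra.
move: sa2 sc2; rewrite /A /C => sa2 sc2.
nra.
Qed.

Lemma enorm_scale (r : R) a : 0 <= r -> enorm (pscale r a) = r * enorm a.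
Proof.
move=> c0; rewrite /enorm /pscale /=.
have -> : (r * a.1) ^+ 2 + (r * a.2) ^+ 2 = r ^+ 2 * (a.1 ^+ 2 + a.2 ^+ 2) by ring.
by rewrite sqrtrM ?sqrtr_sqr ?ger0_norm // sqr_ge0.
Qed.

Lemma enorm_sym a c : enorm (psub a c) = enorm (psub c a).
Proof. rewrite /enorm /psub /=; congr Num.sqrt; ring. Qed.

Definition comb4 (c1 c2 c3 c4 : R) w1 w2 w3 w4 :=
  padd (padd (pscale c1 w1) (pscale c2 w2)) (padd (pscale c3 w3) (pscale c4 w4)).

Lemma comb4_le (c1 c2 c3 c4 m1 m2 m3 m4 : R) w1 w2 w3 w4 :
  0 <= c1 -> 0 <= c2 -> 0 <= c3 -> 0 <= c4 ->
  enorm w1 <= m1 -> enorm w2 <= m2 -> enorm w3 <= m3 -> enorm w4 <= m4 ->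
  enorm (comb4 c1 c2 c3 c4 w1 w2 w3 w4) <= c1 * m1 + c2 * m2 + c3 * m3 + c4 * m4.
Proof.
move=> ? ? ? ? h1 h2 h3 h4; rewrite /comb4.
apply: le_trans (enorm_tri _ _) _.
apply: le_trans (lerD (enorm_tri _ _) (enorm_tri _ _)) _.
rewrite !enorm_scale //.
have := ler_wpM2l (_ : 0 <= c1) h1; have := ler_wpM2l (_ : 0 <= c2) h2.
have := ler_wpM2l (_ : 0 <= c3) h3; have := ler_wpM2l (_ : 0 <= c4) h4.
move=> /(_ _) q4 /(_ _) q3 /(_ _) q2 /(_ _) q1.
have := q1 ltac:(done); have := q2 ltac:(done); have := q3 ltac:(done); have := q4 ltac:(done).
lra.
Qed.

Lemma quad_le p a c d e q (M : R) :
  in_quad p a c d e -> enorm (psub a q) <= M -> enorm (psub c q) <= M ->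
  enorm (psub d q) <= M -> enorm (psub e q) <= M -> enorm (psub p q) <= M.
Proof.
move=> [l1 [l2 [l3 [l4 [[? ? ? ?] [hs ->]]]]]] h1 h2 h3 h4.
have -> : psub (padd (padd (pscale l1 a) (pscale l2 c)) (padd (pscale l3 d) (pscale l4 e))) q
  = comb4 l1 l2 l3 l4 (psub a q) (psub c q) (psub d q) (psub e q).
  have -> : l4 = 1 - l1 - l2 - l3 by lra.
  rewrite /comb4 /psub /padd /pscale /=; congr (_, _); ring.
apply: le_trans; first by apply: comb4_le; eassumption.
by rewrite -!mulrDl hs mul1r.
Qed.

Definition gs (eps : R) a c m := padd (pscale (eps / 2) (padd a c)) (pscale (1 - eps) m).


Lemma bnd (X q w1 w2 w3 w4 : pt R) (c1 c2 c3 c4 M : R) :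
  psub X q = comb4 c1 c2 c3 c4 w1 w2 w3 w4 ->
  0 <= c1 -> 0 <= c2 -> 0 <= c3 -> 0 <= c4 ->
  enorm w1 <= 1 -> enorm w2 <= 1 -> enorm w3 <= 1 -> enorm w4 <= 1 ->
  c1 + c2 + c3 + c4 <= M -> enorm (psub X q) <= M.
Proof.
move=> -> ? ? ? ? h1 h2 h3 h4 hM.
apply: le_trans; first by apply: comb4_le; eassumption.
lra.
Qed.

Ltac eqs := rewrite /gs /comb4 /psub /padd /pscale /=; congr (_, _); try (match goal with H : ?x = _ / 2 |- _ => rewrite H end); by field.

Lemma alg (eps : R) (x0 x1 x2 x3 x4 x5 : pt R) :
  0 <= eps -> eps < 1 / 2 ->
  enorm (psub x1 x0) <= 1 -> enorm (psub x2 x1) <= 1 -> enorm (psub x3 x2) <= 1 ->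
  enorm (psub x4 x3) <= 1 -> enorm (psub x5 x4) <= 1 ->
  forall p,
  (in_quad p x2 x3 (gs eps x2 x4 x3) (gs eps x1 x3 x2) \/
   in_quad p (gs eps x1 x3 x2) (gs eps x2 x4 x3)
     (gs eps (gs eps x1 x3 x2) (gs eps x3 x5 x4) (gs eps x2 x4 x3))
     (gs eps (gs eps x0 x2 x1) (gs eps x2 x4 x3) (gs eps x1 x3 x2))) ->
  enorm (psub p x2) <= 1 + eps ^+ 2 / 2 /\ enorm (psub p x3) <= 1 + eps ^+ 2 / 2.
Proof.
move=> e0 e1 u0 u1 u2 u3 u4 p hq.
have n0 : enorm (psub x0 x1) <= 1 by rewrite enorm_sym.
have n1 : enorm (psub x1 x2) <= 1 by rewrite enorm_sym.
have n2 : enorm (psub x2 x3) <= 1 by rewrite enorm_sym.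
set M := 1 + eps ^+ 2 / 2.
have M1 : 1 <= M by rewrite /M; nra.
have [h hdef] : {h | h = eps / 2} by exists (eps / 2).
have hE : eps = 2 * h by rewrite hdef; field.
have h0 : 0 <= h by lra.
have h1 : h < 1 / 4 by lra.
have cA : 0 <= eps - 3 * h ^+ 2 by nra.
have cB : 0 <= 1 - eps + 3 * h ^+ 2 by nra.
have cC : 0 <= 1 - h by lra.
have hh : 0 <= h ^+ 2 by nra.
have A1 : enorm (psub x2 x2) <= M.
  apply: (@bnd _ _ (psub x3 x2) (psub x3 x2) (psub x3 x2) (psub x3 x2) 0 0 0 0) => //; last lra.
  eqs.
have A2 : enorm (psub x3 x2) <= M by lra.
have A3 : enorm (psub (gs eps x2 x4 x3) x2) <= M.
  apply: (@bnd _ _ (psub x4 x3) (psub x3 x2) (psub x3 x2) (psub x3 x2) h (1 - h) 0 0) => //; last lra.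
  eqs.
have A4 : enorm (psub (gs eps x1 x3 x2) x2) <= M.
  apply: (@bnd _ _ (psub x3 x2) (psub x1 x2) (psub x3 x2) (psub x3 x2) h h 0 0) => //; last lra.
  eqs.
have A5 : enorm (psub (gs eps (gs eps x1 x3 x2) (gs eps x3 x5 x4) (gs eps x2 x4 x3)) x2) <= M.
  apply: (@bnd _ _ (psub x3 x2) (psub x4 x3) (psub x5 x4) (psub x1 x2)
     (1 - eps + 3 * h ^+ 2) (eps - 3 * h ^+ 2) (h ^+ 2) (h ^+ 2)) => //; last by rewrite /M hE; nra.
  eqs.
have A6 : enorm (psub (gs eps (gs eps x0 x2 x1) (gs eps x2 x4 x3) (gs eps x1 x3 x2)) x2) <= M.
  apply: (@bnd _ _ (psub x3 x2) (psub x1 x2) (psub x4 x3) (psub x0 x1)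
     (eps - 3 * h ^+ 2) (eps - 3 * h ^+ 2) (h ^+ 2) (h ^+ 2)) => //; last by rewrite /M hE; nra.
  eqs.
have B1 : enorm (psub x2 x3) <= M by lra.
have B2 : enorm (psub x3 x3) <= M.
  apply: (@bnd _ _ (psub x3 x2) (psub x3 x2) (psub x3 x2) (psub x3 x2) 0 0 0 0) => //; last lra.
  eqs.
have B3 : enorm (psub (gs eps x2 x4 x3) x3) <= M.
  apply: (@bnd _ _ (psub x4 x3) (psub x2 x3) (psub x3 x2) (psub x3 x2) h h 0 0) => //; last lra.
  eqs.
have B4 : enorm (psub (gs eps x1 x3 x2) x3) <= M.
  apply: (@bnd _ _ (psub x2 x3) (psub x1 x2) (psub x3 x2) (psub x3 x2) (1 - h) h 0 0) => //; last lra.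
  eqs.
have B5 : enorm (psub (gs eps (gs eps x1 x3 x2) (gs eps x3 x5 x4) (gs eps x2 x4 x3)) x3) <= M.
  apply: (@bnd _ _ (psub x4 x3) (psub x2 x3) (psub x5 x4) (psub x1 x2)
     (eps - 3 * h ^+ 2) (eps - 3 * h ^+ 2) (h ^+ 2) (h ^+ 2)) => //; last by rewrite /M hE; nra.
  eqs.
have B6 : enorm (psub (gs eps (gs eps x0 x2 x1) (gs eps x2 x4 x3) (gs eps x1 x3 x2)) x3) <= M.
  apply: (@bnd _ _ (psub x2 x3) (psub x1 x2) (psub x4 x3) (psub x0 x1)
     (1 - eps + 3 * h ^+ 2) (eps - 3 * h ^+ 2) (h ^+ 2) (h ^+ 2)) => //; last by rewrite /M hE; nra.
  eqs.
case: hq => hq; split.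
- exact: (quad_le _ _ _ _ _ _ _ hq A1 A2 A3 A4).
- exact: (quad_le _ _ _ _ _ _ _ hq B1 B2 B3 B4).
- exact: (quad_le _ _ _ _ _ _ _ hq A4 A3 A5 A6).
- exact: (quad_le _ _ _ _ _ _ _ hq B4 B3 B5 B6).
Qed.

End Aux.
Arguments gs {R}.

Lemma vtx_gtm (R : rcfType) k (eps : R) b n : (0 < k)%N ->
  vtx k (gtm eps k b) n = gs eps (vtx k b (n + k - 1)) (vtx k b n.+1) (vtx k b n).
Proof.
case: k => [//|k] _; rewrite /vtx /gtm /vtx modn_mod.
rewrite !addnS !subn1 /=.
rewrite /gs; congr (padd (pscale _ (padd (b _) (b _))) _); first exact: modnDml.
by rewrite -[(n %% k.+1).+1]addn1 modnDml addn1. Qed.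

Lemma vtxPS (R : rcfType) k (b : nat -> pt R) n : (0 < k)%N ->
  vtx k b (n + k - 1).+1 = vtx k b n.
Proof. case: k => [//|k] _; by rewrite /vtx addnS subn1 /= -addnS modnDr. Qed.

Lemma vtxSP (R : rcfType) k (b : nat -> pt R) n : (0 < k)%N ->
  vtx k b (n.+1 + k - 1) = vtx k b n.
Proof. case: k => [//|k] _; by rewrite /vtx addnS subn1 /= addSn -addnS modnDr. Qed.

Lemma vtxSPP (R : rcfType) k (b : nat -> pt R) n : (0 < k)%N ->
  vtx k b (n.+1 + k - 1 + k - 1) = vtx k b (n + k - 1).
Proof.
case: k => [//|k] _; rewrite /vtx.
have -> : (n.+1 + k.+1 - 1 + k.+1 - 1 = (n + k.+1 - 1) + k.+1)%N.
  by rewrite !addnS !subn1 /= !addSn.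
by rewrite modnDr.
Qed.

Theorem mainTheorem9 (R : rcfType) (k : nat) (eps : R) (b : nat -> pt R) :
  (3 <= k)%N -> 0 <= eps -> eps < 1 / 2 ->
  convex_ccw k b ->
  (forall j, enorm (psub (vtx k b j) (vtx k b j.+1)) <= 1) ->
  let b1 := gtm eps k b in
  let b2 := gtm eps k b1 in
  forall (j : nat) (p : pt R),
    (in_quad p (vtx k b j) (vtx k b j.+1) (vtx k b1 j.+1) (vtx k b1 j)
     \/ in_quad p (vtx k b1 j) (vtx k b1 j.+1) (vtx k b2 j.+1) (vtx k b2 j)) ->
    enorm (psub p (vtx k b j)) <= 1 + eps ^+ 2 / 2 /\
    enorm (psub p (vtx k b j.+1)) <= 1 + eps ^+ 2 / 2.
Proof.
move=> k3 e0 e1 _ H; cbv zeta => j p.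
have k0 : (0 < k)%N by apply: leq_trans k3.
rewrite ?vtxSP // ?vtxPS // !vtx_gtm // ?vtxSPP // ?vtxSP // ?vtxPS //.
have u0 := H (j + k - 1 + k - 1)%N; rewrite vtxPS // enorm_sym in u0.
have u1 := H (j + k - 1)%N; rewrite vtxPS // enorm_sym in u1.
have u2 := H j; rewrite enorm_sym in u2.
have u3 := H j.+1; rewrite enorm_sym in u3.
have u4 := H j.+2; rewrite enorm_sym in u4.
exact: (@alg R eps _ _ _ _ _ _ e0 e1 u0 u1 u2 u3 u4 p).
Qed.
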